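(* Let $M\geq 1$ and $P=4M-3$. Let $E$ be a $P\times P$ diagonal operator on $\ell(\mathbb{Z}_P)$ with diagonal entries $\{\omega_k\}_{k=0}^{4M-4}$ satisfying $|\omega_k|=1$ for all $k$ and $\omega_j\overline{\omega_k}\notin\mathbb{R}$ for all $j\neq k$. For $x\in\ell(\mathbb{Z}_P)$ with $x[p]=0$ for all $p=M,\ldots,4M-4$ (i.e. an $M$-dimensional complex signal embedded by zero-padding), the signal $x$ is determined up to a global phase factor by the pair $\operatorname{CirAut}(x+Rx)$ and $\operatorname{CirAut}(Ex+REx)$: if $x,y$ are two such signals with $\operatorname{CirAut}(x+Rx)=\operatorname{CirAut}(y+Ry)$ and $\operatorname{CirAut}(Ex+REx)=\operatorname{CirAut}(Ey+REy)$, then $y=\omega x$ for some $\omega\in\mathbb{C}$ with $|\omega|=1$.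
   Context: $\ell(\mathbb{Z}_P)$ denotes the space of $P$-periodic functions $u\colon\mathbb{Z}\to\mathbb{C}$ (i.e. $u[p+P]=u[p]$), with inner product $\langle u,v\rangle=\sum_{p\in\mathbb{Z}_P}u[p]\overline{v[p]}$. The translation operator is $(T^pu)[p']:=u[p'-p]$ and the reversal operator is $(Ru)[p]:=u[-p]$. The circular autocorrelation of $u$ is $\operatorname{CirAut}(u)\in\ell(\mathbb{Z}_P)$ with $\operatorname{CirAut}(u)[p]:=\langle u,T^pu\rangle=\sum_{p'\in\mathbb{Z}_P}u[p']\overline{u[p'-p]}$. The operator $E$ acts by $(Ex)[k]=\omega_kx[k]$ for $k=0,\ldots,P-1$. *)

(* Defs.v *)
From HB Require Import structures.
From mathcomp Require Import all_boot all_order all_algebra.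
From mathcomp Require Import complex.
From mathcomp Require Import reals.
Set Implicit Arguments. Unset Strict Implicit. Unset Printing Implicit Defensive.
Import Order.TTheory GRing.Theory Num.Theory.
Local Open Scope ring_scope.

Section Defs.
Variable C : numClosedFieldType.
Variable P : nat.

Definition signal := 'I_P -> C.

Definition subP (a b : 'I_P) : nat := ((a + (P - b)) %% P)%N.

Definition inner (u v : signal) : C := \sum_(p < P) u p * Num.conj (v p).

(* translation (T^p u)[p'] = u[p' - p] ; reversal (R u)[p] = u[-p] *)
Definition transl (p : 'I_P) (u : signal) : signal :=
  fun p' => u (@Ordinal P (subP p' p) (ltn_pmod _ (leq_ltn_trans (leq0n _) (ltn_ord p')))).

Definition revsig (u : signal) : signal :=
  fun p => u (@Ordinal P ((P - p) %% P)%N (ltn_pmod _ (leq_ltn_trans (leq0n _) (ltn_ord p)))).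

Definition CirAut (u : signal) : signal := fun p => inner u (transl p u).

Definition diagop (omega : 'I_P -> C) (x : signal) : signal := fun k => omega k * x k.

Definition addsig (u v : signal) : signal := fun p => u p + v p.
End Defs.

(* Main.v *)
Require Import Defs.
From HB Require Import structures.
From mathcomp Require Import all_boot all_order all_algebra.
From mathcomp Require Import complex.
From mathcomp Require Import reals.
From mathcomp Require Import zify ring.
From Stdlib Require Import FunctionalExtensionality.
Set Implicit Arguments. Unset Strict Implicit. Unset Printing Implicit Defensive.
Import Order.TTheory GRing.Theory Num.Theory.
Local Open Scope ring_scope.

Definition Wn (l i k : nat) : nat :=
  ((i + k == l) + (i == k + l) + (k == i + l) + (i + k + l == 0))%N.

Section PartB.
Variable C : numClosedFieldType.
Variable N : nat.

Definition H (c : nat -> C) (l : nat) : C :=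
  \sum_(i < N) \sum_(k < N) c i * (c k)^* * (Wn l i k)%:R.

Lemma sum2_one (f : nat -> nat -> C) p : (p < N)%N ->
  (forall i k, (i < N)%N -> (k < N)%N -> (i != p) || (k != p) -> f i k = 0) ->
  \sum_(i < N) \sum_(k < N) f i k = f p p.
Proof.
move=> hp hf; rewrite (bigD1 (Ordinal hp)) //= (bigD1 (Ordinal hp)) //=.
rewrite big1 ?addr0; last first.
  by move=> k /= hk; apply: hf => //; rewrite -(inj_eq val_inj) /= in hk; rewrite hk orbT.
rewrite big1 ?addr0 // => i hi; rewrite -(inj_eq val_inj) /= in hi.
by rewrite big1 // => k _; apply: hf => //; rewrite hi.
Qed.

Lemma sum2_pt (f : nat -> nat -> C) p q : (p < N)%N -> (q < N)%N ->
  (forall i k, (i < N)%N -> (k < N)%N -> (i != p) || (k != q) -> f i k = 0) ->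
  \sum_(i < N) \sum_(k < N) f i k = f p q.
Proof.
move=> hp hq hf; rewrite (bigD1 (Ordinal hp)) //= (bigD1 (Ordinal hq)) //=.
rewrite big1 ?addr0; last first.
  by move=> k /= hk; apply: hf => //; rewrite -(inj_eq val_inj) /= in hk; rewrite hk orbT.
rewrite big1 ?addr0 // => i hi; rewrite -(inj_eq val_inj) /= in hi.
by rewrite big1 // => k _; apply: hf => //; rewrite hi.
Qed.

Lemma sum2_two (f : nat -> nat -> C) p q : (p < N)%N -> (q < N)%N -> p != q ->
  (forall i k, (i < N)%N -> (k < N)%N -> (i != p) || (k != q) -> (i != q) || (k != p) ->
     f i k = 0) ->
  \sum_(i < N) \sum_(k < N) f i k = f p q + f q p.
Proof.
move=> hp hq hpq hf.
pose f1 i k := if (i == p) && (k == q) then f i k else 0.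
pose f2 i k := f i k - f1 i k.
have -> : \sum_(i < N) \sum_(k < N) f i k =
   \sum_(i < N) \sum_(k < N) f1 i k + \sum_(i < N) \sum_(k < N) f2 i k.
  rewrite -big_split; apply: eq_bigr => i _; rewrite -big_split; apply: eq_bigr => k _.
  by rewrite /f2 /= addrCA subrr addr0.
rewrite (sum2_pt (f:=f1) hp hq); last by move=> i k _ _ h; rewrite /f1; case: ifP => // /andP [h1 h2]; rewrite h1 h2 in h.
rewrite (sum2_pt (f:=f2) hq hp); last first.
  move=> i k hi hk h; rewrite /f2 /f1.
  case: (boolP ((i == p) && (k == q))) => [_|h2]; first by rewrite subrr.
  have h3 : (i != p) || (k != q) by rewrite -negb_and.
  rewrite (hf i k hi hk h3 h); exact: subr0.
by rewrite /f2 /f1 !eqxx (negbTE hpq) /= andbF subr0.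
Qed.

Lemma WnC l i k : Wn l i k = Wn l k i.
Proof. rewrite /Wn; lia. Qed.

Lemma Wn_neq0 l i k : (i + k = l)%N -> (Wn l i k)%:R != 0 :> C.
Proof. by move=> h; rewrite pnatr_eq0 /Wn h eqxx. Qed.

Lemma mulconj_eq0 (z : C) : z * z^* = 0 -> z = 0.
Proof. by move=> h; apply/eqP; rewrite -normr_eq0 -sqrf_eq0 normCK h. Qed.

Lemma Top (c : nat -> C) T : (T < N)%N -> (forall n, (T < n)%N -> c n = 0) ->
  H c (T + T) = c T * (c T)^* * (Wn (T + T) T T)%:R.
Proof.
move=> hT hc; rewrite /H (sum2_one (f:=fun i k => c i * (c k)^* * (Wn (T+T) i k)%:R) hT) //.
move=> i k hi hk hik.
case: (ltnP T i) => [/hc -> | hi']; first by rewrite !mul0r.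
case: (ltnP T k) => [/hc -> | hk']; first by rewrite conjC0 mulr0 mul0r.
have -> : Wn (T + T) i k = 0%N.
  rewrite /Wn; case/orP: hik => /eqP hik.
  - have -> : (i + k == T + T) = false by lia.
    have -> : (i == k + (T + T)) = false by lia.
    have -> : (k == i + (T + T)) = false by lia.
    have -> : (i + k + (T + T) == 0)%N = false by lia.
    done.
  - have -> : (i + k == T + T) = false by lia.
    have -> : (i == k + (T + T)) = false by lia.
    have -> : (k == i + (T + T)) = false by lia.
    have -> : (i + k + (T + T) == 0)%N = false by lia.
    done.
by rewrite mulr0.
Qed.


Lemma H_ext (c c' : nat -> C) l : (forall n, c n = c' n) -> H c l = H c' l.
Proof.
by move=> h; rewrite /H; apply: eq_bigr => i _; apply: eq_bigr => k _; rewrite !h.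
Qed.

Lemma Hdiff (ca cb : nat -> C) l : H ca l - H cb l =
  \sum_(i < N) \sum_(k < N) (ca i * (ca k)^* - cb i * (cb k)^*) * (Wn l i k)%:R.
Proof.
rewrite /H -sumrB; apply: eq_bigr => i _; rewrite -sumrB; apply: eq_bigr => k _.
by rewrite mulrBl.
Qed.

Variable M : nat.
Hypothesis hMN : (M <= N)%N.
Variables a b om : nat -> C.
Hypothesis ha : forall n, (M <= n)%N -> a n = 0.
Hypothesis hb : forall n, (M <= n)%N -> b n = 0.
Hypothesis hab : forall l, (l <= 2 * M - 2)%N -> H a l = H b l.
Hypothesis hom : forall l, (l <= 2 * M - 2)%N ->
  H (fun n => om n * a n) l = H (fun n => om n * b n) l.
Hypothesis homr : forall j k, (j < M)%N -> (k < M)%N -> j != k ->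
  om j * (om k)^* \notin Num.real.

Lemma Vanish T : (forall n, (T <= n)%N -> a n = 0) -> forall n, (T <= n)%N -> b n = 0.
Proof.
move=> haT.
suff h : forall d n, (T <= n)%N -> (M <= n + d)%N -> b n = 0.
  by move=> n hn; apply: (h M n hn); lia.
elim=> [|d IH] n hTn hMn; first by apply: hb; lia.
case: (leqP M n) => hnM; first by apply: hb.
have hbig : forall m, (n < m)%N -> b m = 0 by move=> m hm; apply: IH; lia.
have habig : forall m, (n < m)%N -> a m = 0 by move=> m hm; apply: haT; lia.
have hnN : (n < N)%N by lia.
have e := hab (l := n + n) ltac:(lia).
rewrite (Top hnN habig) (Top hnN hbig) (haT n hTn) !mul0r in e.
have /eqP := esym e; rewrite mulf_eq0 (negbTE (Wn_neq0 (l := n + n) (i := n) (k := n) erefl)) orbF.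
by rewrite mul_conjC_eq0 => /eqP.
Qed.

Lemma Bmain : exists w : C, `|w| = 1 /\ forall n, b n = w * a n.
Proof.
case: (boolP [exists i : 'I_M, a i != 0]) => [hex | hnex]; last first.
  have ha0 : forall n, (0 <= n)%N -> a n = 0.
    move=> n _; case: (ltnP n M) => hn; last exact: ha.
    by apply/eqP; move/existsPn: hnex => /(_ (Ordinal hn)) /negPn.
  exists 1; split; first by rewrite normr1.
  by move=> n; rewrite mul1r (ha0 n) // (Vanish ha0 (leq0n n)).
have exL : exists n, (n < M)%N && (a n != 0).
  by case/existsP: hex => i hi; exists i; rewrite ltn_ord hi.
have bnd : forall n, (n < M)%N && (a n != 0) -> (n <= M)%N.
  by move=> n /andP [h _]; lia.
case: (ex_maxnP exL bnd) => L /andP [hLM haL] hmax.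
have haL' : forall n, (L < n)%N -> a n = 0.
  move=> n hn; case: (ltnP n M) => hnM; last exact: ha.
  apply/eqP; apply/negP => /negP h; have := hmax n; rewrite hnM h => /(_ isT); lia.
have hbL : forall n, (L < n)%N -> b n = 0 := Vanish haL'.
have hLN : (L < N)%N by lia.
have GLL : a L * (a L)^* = b L * (b L)^*.
  have e := hab (l := L + L) ltac:(lia).
  rewrite (Top hLN haL') (Top hLN hbL) in e.
  exact: (mulIf (Wn_neq0 (l := L + L) (i := L) (k := L) erefl) e).
have aLc : a L * (a L)^* != 0 by rewrite mul_conjC_eq0.
have bLc : b L * (b L)^* != 0 by rewrite -GLL.
have Q : forall m, (m <= L)%N -> a L * (a m)^* = b L * (b m)^*.
  suff h : forall d m, (m <= L)%N -> (L <= m + d)%N -> a L * (a m)^* = b L * (b m)^*.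
    by move=> m hm; apply: (h L) => //; lia.
  elim=> [|d IH] m hmL hLd.
    by have -> : m = L by lia.
  case: (eqVneq m L) => [-> //|hmL'].
  have hml : (m < L)%N by lia.
  have IHm : forall m', (m < m')%N -> (m' <= L)%N -> a L * (a m')^* = b L * (b m')^*.
    by move=> m' h1 h2; apply: IH => //; lia.
  have key : forall (c : nat -> C) i k, c L * (c L)^* != 0 ->
      c i * (c k)^* = ((c L * (c i)^*)^* * (c L * (c k)^*)) / (c L * (c L)^*).
    move=> c i k hc; apply: (mulIf hc); rewrite divfK // rmorphM /= conjCK; ring.
  have hint : forall i k, (m < i)%N -> (i <= L)%N -> (m < k)%N -> (k <= L)%N ->
      a i * (a k)^* = b i * (b k)^*.
    move=> i k h1 h2 h3 h4.
    by rewrite (key a) // (key b) // -GLL (IHm i) // (IHm k).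
  pose z := a L * (a m)^* - b L * (b m)^*.
  have van : forall g : nat -> nat -> C,
      \sum_(i < N) \sum_(k < N) g i k * (a i * (a k)^* - b i * (b k)^*) * (Wn (L + m) i k)%:R
      = (g L m * z + g m L * z^*) * (Wn (L + m) L m)%:R.
    move=> g.
    rewrite (sum2_two (f := fun i k => g i k * (a i * (a k)^* - b i * (b k)^*) * (Wn (L + m) i k)%:R) hLN (q := m) ltac:(lia) (negbT (gtn_eqF hml))); last first.
      move=> i k hi hk h1 h2.
      case: (ltnP L i) => hi'; first by rewrite (haL' _ hi') (hbL _ hi') !mul0r subrr mulr0 mul0r.
      case: (ltnP L k) => hk'; first by rewrite (haL' _ hk') (hbL _ hk') conjC0 !mulr0 subrr mulr0 mul0r.
      case: (ltnP m i) => hi''.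
        case: (ltnP m k) => hk''.
          by rewrite hint // subrr mulr0 mul0r.
        have -> : Wn (L + m) i k = 0%N.
          rewrite /Wn; move: h1 h2 => /orP [/eqP h1|/eqP h1] /orP [/eqP h2|/eqP h2]; lia.
        by rewrite mulr0.
      have -> : Wn (L + m) i k = 0%N.
        rewrite /Wn; move: h1 h2 => /orP [/eqP h1|/eqP h1] /orP [/eqP h2|/eqP h2]; lia.
      by rewrite mulr0.
    rewrite (WnC (L + m) m L) /z rmorphB /= !rmorphM /= !conjCK.
    rewrite [a m * _]mulrC [b m * _]mulrC; ring.
  have W0 := Wn_neq0 (l := L + m) (i := L) (k := m) erefl.
  have e1 : z + z^* = 0.
    have e := hab (l := L + m) ltac:(lia).
    move/eqP: e; rewrite -subr_eq0 Hdiff.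
    under eq_bigr => i _ do under eq_bigr => k _ do rewrite -[_ - _]mul1r.
    rewrite (van (fun _ _ => 1)) !mul1r mulf_eq0 (negbTE W0) orbF.
    by move/eqP.
  pose c := om L * (om m)^*.
  have e2 : c * z + c^* * z^* = 0.
    have e := hom (l := L + m) ltac:(lia).
    move/eqP: e; rewrite -subr_eq0 Hdiff.
    rewrite (_ : \sum_(i < N) \sum_(k < N) _ = \sum_(i < N) \sum_(k < N)
       (om i * (om k)^*) * (a i * (a k)^* - b i * (b k)^*) * (Wn (L + m) i k)%:R); last first.
      apply: eq_bigr => i _; apply: eq_bigr => k _; congr (_ * _); rewrite !rmorphM /=; ring.
    rewrite (van (fun i k => om i * (om k)^*)) mulf_eq0 (negbTE W0) orbF.
    by rewrite /c rmorphM /= conjCK [(om L)^* * _]mulrC => /eqP.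
  have hc : c - c^* != 0.
    have h := homr hLM (ltn_trans hml hLM) (negbT (gtn_eqF hml)).
    rewrite CrealE in h; by rewrite subr_eq0 eq_sym.
  have z0 : z = 0.
    have ez : z^* = - z by apply/eqP; rewrite -addr_eq0 addrC e1.
    rewrite ez in e2.
    have hz : (c - c^*) * z = 0 by rewrite -[RHS]e2; ring.
    by move/eqP: hz; rewrite mulf_eq0 (negbTE hc) => /eqP.
  by apply/eqP; rewrite -subr_eq0 -/z z0.
have hbL0 : b L != 0 by move: bLc; rewrite mul_conjC_eq0.
have nabs : `|a L| = `|b L|.
  by apply/eqP; rewrite -(@eqrXn2 _ 2 _ _ erefl (normr_ge0 _) (normr_ge0 _)) !normCK GLL.
exists (b L / a L); split.
  by rewrite normf_div nabs divff // normr_eq0.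
move=> n; case: (ltnP L n) => hn; first by rewrite (haL' _ hn) (hbL _ hn) mulr0.
have e' : (a L)^* * a n = (b L)^* * b n.
  by have := congr1 Num.conj (Q n hn); rewrite !rmorphM /= !conjCK.
have hbLc : (b L)^* != 0 by rewrite conjC_eq0.
apply: (mulIf hbLc).
rewrite /= [b n * _]mulrC -e'.
have -> : b L / a L * a n * (b L)^* = (b L * (b L)^*) * a n / a L by ring.
rewrite -GLL; field; exact: haL.
Qed.

End PartB.

Lemma mod_cases v P : (v < P + P)%N ->
  (((v < P) /\ v %% P = v) \/ ((P <= v) /\ v %% P = (v - P)))%N.
Proof.
move=> h; case: (ltnP v P) => hv; first by left; rewrite modn_small.
right; split => //; rewrite -{1}(subnK hv) modnDr modn_small //; lia.
Qed.

Ltac kill_mod := repeat match goal with |- context [(?v %% ?Q)%N] =>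
  lazymatch v with context [modn _ _] => fail | _ => idtac end;
  have [[? ->]|[? ->]] := mod_cases (v:=v) (P:=Q) ltac:(lia) end.

Section Bridge.
Variable C : numClosedFieldType.
Variables M P : nat.
Hypothesis hM : (1 <= M)%N.
Hypothesis hP : P = (4 * M - 3)%N.

Definition ext (x : 'I_P -> C) (n : nat) : C :=
  match insub n with Some i => x i | None => 0 end.

Lemma extE x (i : 'I_P) : ext x i = x i.
Proof. by rewrite /ext valK. Qed.

Lemma ext_zero x : (forall p : 'I_P, (M <= p)%N -> x p = 0) ->
  forall n, (M <= n)%N -> ext x n = 0.
Proof. by move=> hx n hn; rewrite /ext; case: insubP => // i _ hi; apply: hx; rewrite hi. Qed.

Lemma sum_ind2 s t : (s < P)%N -> (\sum_(p < P) (((p : nat) == s) * ((p : nat) == t)))%N = (s == t).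
Proof.
move=> hs; rewrite (bigD1 (Ordinal hs)) //= eqxx mul1n big1 ?addn0 // => p hp.
have -> : ((p : nat) == s) = false by rewrite -(inj_eq val_inj) /= in hp; exact: negbTE.
by [].
Qed.

Lemma tail_lem i k l : (i < M)%N -> (k < M)%N -> (l <= 2 * M - 2)%N ->
 ((i == (k + l) %% P) + (i == (l + P - k) %% P) + ((P - i) %% P == (k + l) %% P) + ((P - i) %% P == (l + P - k) %% P))%N = Wn l i k.
Proof.
move=> hi hk hl.
have -> : ((i == (k + l) %% P) = (i == k + l))%N by kill_mod; apply/eqP/eqP; lia.
have -> : ((i == (l + P - k) %% P) = (i + k == l))%N by kill_mod; apply/eqP/eqP; lia.
have -> : (((P - i) %% P == (k + l) %% P) = (i + k + l == 0)%N)%N by kill_mod; apply/eqP/eqP; lia.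
have -> : (((P - i) %% P == (l + P - k) %% P) = (k == i + l))%N by kill_mod; apply/eqP/eqP; lia.
rewrite /Wn; lia.
Qed.
Lemma sum4 (A B C0 D : nat) : (A < P)%N -> (B < P)%N ->
  (\sum_(p < P) (((p : nat) == A) + ((p : nat) == B)) * (((p : nat) == C0) + ((p : nat) == D)))%N
  = ((A == C0) + (A == D) + (B == C0) + (B == D))%N.
Proof.
move=> hA hB.
rewrite (eq_bigr _ (fun p _ => mulnDl _ _ _)) big_split /=.
rewrite (eq_bigr _ (fun p _ => mulnDr _ _ _)) big_split /=.
rewrite (eq_bigr _ (fun p _ => mulnDr _ _ _)) big_split /=.
by rewrite !sum_ind2 // addnA.
Qed.

Lemma count_lem i k l : (i < M)%N -> (k < M)%N -> (l <= 2 * M - 2)%N ->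
  (\sum_(p < P) ((((p : nat) == i) + ((P - p) %% P == i)) *
      (((p + (P - l)) %% P == k) + ((P - (p + (P - l)) %% P) %% P == k))))%N = Wn l i k.
Proof.
move=> hi hk hl.
have e : forall p : 'I_P, ((((p : nat) == i) + ((P - p) %% P == i)) *
      (((p + (P - l)) %% P == k) + ((P - (p + (P - l)) %% P) %% P == k)) =
   (((p : nat) == i) + ((p : nat) == (P - i) %% P)) * (((p : nat) == (k + l) %% P) + ((p : nat) == (l + P - k) %% P)))%N.
  move=> p; have hp := ltn_ord p.
  have -> : (((P - p) %% P == i) = ((p : nat) == (P - i) %% P))%N by kill_mod; apply/eqP/eqP; lia.
  have -> : (((p + (P - l)) %% P == k) = ((p : nat) == (k + l) %% P))%N by kill_mod; apply/eqP/eqP; lia.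
  have -> : (((P - (p + (P - l)) %% P) %% P == k) = ((p : nat) == (l + P - k) %% P))%N by kill_mod; apply/eqP/eqP; lia.
  by [].
rewrite (eq_bigr _ (fun p _ => e p)) sum4; [exact: tail_lem | lia | apply: ltn_pmod; lia].
Qed.
Lemma xsum (x : 'I_P -> C) (q : 'I_P) : x q = \sum_(i < P) x i * ((q : nat) == (i : nat))%:R.
Proof.
rewrite (bigD1 q) //= eqxx mulr1 big1 ?addr0 // => i hi.
have -> : ((q : nat) == (i : nat)) = false by rewrite (inj_eq val_inj) eq_sym (negbTE hi).
by rewrite mulr0.
Qed.

Lemma prod_sums (x : 'I_P -> C) (A B : 'I_P -> nat) :
  (\sum_(i < P) x i * (A i)%:R) * (\sum_(k < P) x k * (B k)%:R)^* =
  \sum_(i < P) \sum_(k < P) x i * (x k)^* * (A i * B k)%:R.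
Proof.
rewrite rmorph_sum mulr_suml; apply: eq_bigr => i _; rewrite mulr_sumr.
apply: eq_bigr => k _; rewrite rmorphM /= conjC_nat natrM; ring.
Qed.

Lemma bridge (x : 'I_P -> C) (hx : forall p : 'I_P, (M <= p)%N -> x p = 0)
  (l : 'I_P) (hl : (l <= 2 * M - 2)%N) :
  CirAut (addsig x (revsig x)) l = H P (ext x) l.
Proof.
rewrite /CirAut /inner /transl /addsig /revsig /H /subP /=.
have uexp : forall q q' : 'I_P, x q + x q' =
    \sum_(i < P) x i * (((q : nat) == (i : nat)) + ((q' : nat) == (i : nat)))%:R.
  move=> q q'; rewrite (xsum x q) (xsum x q') -big_split; apply: eq_bigr => i _.
  by rewrite natrD mulrDr.
under eq_bigr => p _ do rewrite !uexp prod_sums.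
rewrite exchange_big; apply: eq_bigr => i _.
rewrite exchange_big; apply: eq_bigr => k _.
rewrite !extE -mulr_sumr -natr_sum.
case: (ltnP i M) => hiM; last by rewrite hx // !mul0r.
case: (ltnP k M) => hkM; last by rewrite (hx k) // rmorph0 !mulr0 !mul0r.
by rewrite /= count_lem.
Qed.

End Bridge.

Unset Implicit Arguments. Set Strict Implicit.

Theorem theorem5 (R : realType) (M : nat) (hM : (1 <= M)%N)
  (omega : 'I_(4 * M - 3) -> R[i])
  (homega_norm : forall k, `|omega k| = 1)
  (homega_nreal : forall j k : 'I_(4 * M - 3), j != k ->
      omega j * Num.conj (omega k) \notin Num.real)
  (x y : 'I_(4 * M - 3) -> R[i])
  (hx : forall p : 'I_(4 * M - 3), (M <= p)%N -> x p = 0)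
  (hy : forall p : 'I_(4 * M - 3), (M <= p)%N -> y p = 0)
  (h1 : CirAut (addsig x (revsig x)) = CirAut (addsig y (revsig y)))
  (h2 : CirAut (addsig (diagop omega x) (revsig (diagop omega x)))
        = CirAut (addsig (diagop omega y) (revsig (diagop omega y)))) :
  exists w : R[i], `|w| = 1 /\ y = (fun p => w * x p).
Proof.
have hMN : (M <= 4 * M - 3)%N by lia.
have ha := ext_zero (C := R[i]) hx.
have hb := ext_zero (C := R[i]) hy.
have hdx : forall p : 'I_(4 * M - 3), (M <= p)%N -> diagop omega x p = 0.
  by move=> p hp; rewrite /diagop hx // mulr0.
have hdy : forall p : 'I_(4 * M - 3), (M <= p)%N -> diagop omega y p = 0.
  by move=> p hp; rewrite /diagop hy // mulr0.
have extD : forall (z : 'I_(4 * M - 3) -> R[i]) n,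
    ext (diagop omega z) n = ext omega n * ext z n.
  by move=> z n; rewrite /ext /diagop; case: insub => [i|] //; rewrite mul0r.
have hab : forall l, (l <= 2 * M - 2)%N -> H (4 * M - 3) (ext x) l = H (4 * M - 3) (ext y) l.
  move=> l hl; have hlP : (l < 4 * M - 3)%N by lia.
  have e1 : CirAut (addsig x (revsig x)) (Ordinal hlP) = H (4 * M - 3) (ext x) l :=
    bridge (l := Ordinal hlP) hM erefl hx hl.
  have e2 : CirAut (addsig y (revsig y)) (Ordinal hlP) = H (4 * M - 3) (ext y) l :=
    bridge (l := Ordinal hlP) hM erefl hy hl.
  by rewrite -e1 -e2 h1.
have hom : forall l, (l <= 2 * M - 2)%N ->
    H (4 * M - 3) (fun n => ext omega n * ext x n) l =
    H (4 * M - 3) (fun n => ext omega n * ext y n) l.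
  move=> l hl; have hlP : (l < 4 * M - 3)%N by lia.
  have e1 : CirAut (addsig (diagop omega x) (revsig (diagop omega x))) (Ordinal hlP)
      = H (4 * M - 3) (ext (diagop omega x)) l :=
    bridge (l := Ordinal hlP) hM erefl hdx hl.
  have e2 : CirAut (addsig (diagop omega y) (revsig (diagop omega y))) (Ordinal hlP)
      = H (4 * M - 3) (ext (diagop omega y)) l :=
    bridge (l := Ordinal hlP) hM erefl hdy hl.
  rewrite -(H_ext (4 * M - 3) l (extD x)) -(H_ext (4 * M - 3) l (extD y)).
  by rewrite -e1 -e2 h2.
have homr : forall j k, (j < M)%N -> (k < M)%N -> j != k ->
    ext omega j * (ext omega k)^* \notin Num.real.
  move=> j k hj hk hjk.
  have hjP : (j < 4 * M - 3)%N by lia.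
  have hkP : (k < 4 * M - 3)%N by lia.
  rewrite (_ : ext omega j = omega (Ordinal hjP)); last exact: (extE omega (Ordinal hjP)).
  rewrite (_ : ext omega k = omega (Ordinal hkP)); last exact: (extE omega (Ordinal hkP)).
  by apply: homega_nreal; rewrite -(inj_eq val_inj) /=.
have [w [hw1 hw2]] := Bmain hMN ha hb hab hom homr.
exists w; split => //.
apply: functional_extensionality => p.
by have := hw2 p; rewrite !extE.
Qed.
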